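(* Let $k>1$ be an odd integer and let $n_k=\lceil \log_2 k\rceil$. Then for every integer $x\in\{0,1,\ldots,k-1\}$ there exist $n_k$ pairwise distinct integers $i_1,\ldots,i_{n_k}\in\{0,1,\ldots,n_k+k-2\}$ such that $$x\equiv 2^{i_1}+2^{i_2}+\cdots+2^{i_{n_k}}\pmod k.$$ In other words, $x$ is congruent modulo $k$ to a sum of exactly $n_k$ distinct elements of $D=\{2^i: i=0,1,\ldots,n_k+k-2\}$.
   Context: $n_k=\lceil\log_2 k\rceil$ is the smallest integer $n$ with $k\le 2^{n}$. *)

(* Defs.v *)
From mathcomp Require Import all_boot.
(* n_k = ceil(log2 k) = smallest n with k <= 2^n, i.e. mathcomp's up_log 2 k *)
Definition nk (k : nat) : nat := up_log 2 k.

(* Main.v *)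
Require Import Defs.
From mathcomp Require Import all_boot all_fingroup all_solvable.

Fixpoint bits (n w : nat) : seq nat :=
  if n is n'.+1 then
    (if odd w then 0 :: map S (bits n' w./2) else map S (bits n' w./2))
  else [::].

Lemma sum_mapS (s : seq nat) : \sum_(i <- map S s) 2 ^ i = (\sum_(i <- s) 2 ^ i).*2.
Proof.
elim: s => [|a s IH]; first by rewrite !big_nil.
by rewrite /= !big_cons IH expnS doubleD mul2n.
Qed.

Lemma bits_sum n w : w < 2 ^ n -> \sum_(i <- bits n w) 2 ^ i = w.
Proof.
elim: n w => [|n IH] w /=.
  by rewrite expn0 ltnS leqn0 => /eqP ->; rewrite big_nil.
move=> hw.
have hw2 : w./2 < 2 ^ n.
  by rewrite ltn_half_double -mul2n -expnS.
case: ifP => ho; rewrite ?big_cons sum_mapS IH //.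
  by rewrite expn0 add1n -{2}(odd_double_half w) ho.
by rewrite -{2}(odd_double_half w) ho.
Qed.

Lemma bits_lt n w : all (fun i => i < n) (bits n w).
Proof.
elim: n w => [|n IH] w //=.
have H : all (fun i => i < n.+1) (map S (bits n w./2)).
  by rewrite all_map; apply: sub_all (IH w./2) => i /=.
by case: ifP => _ //=; rewrite H.
Qed.

Lemma bits_uniq n w : uniq (bits n w).
Proof.
elim: n w => [|n IH] w //=.
have H : uniq (map S (bits n w./2)) by rewrite map_inj_uniq // => a b [].
case: ifP => _ //=; rewrite H andbT.
by apply/mapP => -[].
Qed.

Lemma bits_double n d : bits n.+1 d.*2 = map S (bits n d).
Proof. by rewrite /= odd_double doubleK. Qed.

Lemma bits_size_S n v : v < 2 ^ n -> size (bits n.+1 v) = size (bits n v).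
Proof.
elim: n v => [|n IH] v.
  by rewrite expn0 ltnS leqn0 => /eqP ->.
move=> hv.
have hv2 : v./2 < 2 ^ n.
  by rewrite ltn_half_double -mul2n -expnS.
rewrite [bits n.+2 v]/= [bits n.+1 v]/=.
by case: ifP => _ /=; rewrite !size_map IH.
Qed.
From Stdlib Require Import Lia.

Lemma arith1 (N h : nat) (b : bool) : h < N -> (N.*2 - 1 - (b + h.*2)) = (~~ b) + (N - 1 - h).*2.
Proof.
move=> /ltP H; rewrite -!addnn; case: b => /=; rewrite /addn /subn /=; unfold addn_rec, subn_rec; lia.
Qed.

Lemma bits_compl n v : v < 2 ^ n -> size (bits n (2 ^ n - 1 - v)) + size (bits n v) = n.
Proof.
elim: n v => [|n IH] v hv //=.
have hv2 : v./2 < 2 ^ n by rewrite ltn_half_double -mul2n -expnS.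
have E : 2 ^ n.+1 - 1 - v = (~~ odd v) + (2 ^ n - 1 - v./2).*2.
  by rewrite -arith1 // expnS mul2n odd_double_half.
rewrite E oddD odd_double addbF.
have -> : (~~ odd v + (2 ^ n - 1 - v./2).*2)./2 = 2 ^ n - 1 - v./2.
  by rewrite half_bit_double.
by case: (odd v) => /=; rewrite !size_map ?addSn ?addnS IH.
Qed.

Ltac tonat := repeat match goal with
  | H : is_true (_ <= _) |- _ => move/leP: H => H
  end; try apply/leP; try apply/eqP; rewrite ?eqE /=; try apply/eqP;
  rewrite /addn /subn /muln /=; unfold addn_rec, subn_rec, muln_rec.

Lemma build n m u v : v < 2 ^ n -> u < 2 ^ n ->
  size (bits n u) = size (bits n v) -> n <= m ->
  let s := bits n (2 ^ n - 1 - v) ++ map (addn m) (bits n u) in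
  [/\ size s = n, uniq s, all (fun i => i < n + m) s
    & \sum_(i <- s) 2 ^ i = (2 ^ n - 1 - v) + 2 ^ m * u].
Proof.
move=> hv hu hs hnm s; split.
- by rewrite size_cat size_map hs bits_compl.
- rewrite cat_uniq bits_uniq map_inj_uniq ?bits_uniq; last by move=> a b /addnI.
  rewrite andbT /=; apply/hasPn => i /mapP [j _ ->].
  apply/negP => /(allP (bits_lt n (2 ^ n - 1 - v))) /=.
  by rewrite ltnNge (leq_trans hnm) // leq_addr.
- rewrite all_cat; apply/andP; split.
    by apply: sub_all (bits_lt _ _) => i /= hi; rewrite ltn_addr.
  rewrite all_map; apply: sub_all (bits_lt n u) => i /= hi.
  by rewrite addnC ltn_add2r.
- rewrite big_cat /= bits_sum; last by apply: leq_ltn_trans (leq_subr _ _) _; rewrite subn1 ltn_predL expn_gt0.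
  rewrite big_map.
  have -> : \sum_(j <- bits n u) 2 ^ (m + j) = 2 ^ m * \sum_(j <- bits n u) 2 ^ j.
    by rewrite big_distrr /=; apply: eq_bigr => j _; rewrite expnD.
  by rewrite bits_sum.
Qed.

Lemma totient_le k : 1 < k -> totient k <= k - 1.
Proof.
move=> hk; rewrite totient_count_coprime big_ltn ?(ltnW hk) //.
have -> : coprime k 0 = false by rewrite /coprime gcdn0; case: k hk => [|[|k]].
rewrite add0n.
have H : \sum_(1 <= i < k) (coprime k i : nat) <= \sum_(1 <= i < k) 1 by apply: leq_sum => i _; apply: leq_b1.
by apply: leq_trans H _; rewrite sum_nat_const_nat muln1 subn1.
Qed.

Theorem mainTheorem1 (k : nat) (hk1 : 1 < k) (hodd : odd k) (x : nat) (hx : x < k) :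
  exists s : seq nat,
    [/\ size s = nk k, uniq s, all (fun i => i <= nk k + k - 2) s
      & x = \sum_(i <- s) 2 ^ i %[mod k]].
Proof.
rewrite /nk.
have hn0 : 0 < up_log 2 k by rewrite up_log_gt0 hk1.
have hup := up_logP k (isT : 1 < 2).
have hlo := up_log_gtn (isT : 1 < 2) hk1.
move: hn0 hup hlo; case: (up_log 2 k) => [//|n'] _ hup hlo /=.
set n := n'.+1 in hup *.
have hkn : k < 2 ^ n.
  rewrite ltn_neqAle hup andbT; apply/negP => /eqP E.
  by move: hodd; rewrite E expnS oddM.
set m := totient k.
have Em : 2 ^ m = 1 %[mod k] by apply: Euler_exp_totient; rewrite coprime2n.
have hmk : m <= k - 1 by apply: totient_le.
have hnm : n <= m.
  rewrite ltnNge; apply/negP => hmn.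
  have hm0 : 0 < m by rewrite totient_gt0 ltnW.
  have : 2 ^ m < k by apply: leq_ltn_trans hlo; rewrite leq_exp2l.
  move=> hlt; move: Em; rewrite (modn_small hlt) modn_small //.
  by move=> /eqP; rewrite -(expn0 2) eqn_exp2l // => /eqP hm; rewrite hm in hm0.
set a := 2 ^ n'.
have ha : 2 ^ n = a.*2 by rewrite expnS mul2n.
set r := (x + (k - a %% k)) %% k.
have hr : r < k by rewrite ltn_mod ltnW.
set y := a + r.
have hy : y = x %[mod k].
  rewrite /y /r modnDmr.
  have ht : a %% k < k by rewrite ltn_mod ltnW.
  have E : a + (x + (k - a %% k)) = (a %/ k).+1 * k + x.
    rewrite {1}(divn_eq a k) mulSn.
    move: (a %/ k * k) (a %% k) ht => p t ht.
    move/leP: ht => *; unfold addn, subn, addn_rec, subn_rec in *; lia.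
  by rewrite E modnMDl.
have key : forall u v, v < 2 ^ n -> u < 2 ^ n -> size (bits n u) = size (bits n v) ->
   (2 ^ n - 1 - v) + u = y ->
   exists s : seq nat, [/\ size s = n, uniq s, all (fun i => i <= n + k - 2) s
      & x = \sum_(i <- s) 2 ^ i %[mod k]].
  move=> u v hv hu hs hy'.
  have [h1 h2 h3 h4] := @build n m u v hv hu hs hnm.
  eexists; split; [exact h1| exact h2| |].
    apply: sub_all h3 => i /= hi.
    move/leP: hi; move/leP: hmk; move/leP: hk1 => H1 H2 H3; apply/leP.
    unfold addn, subn, addn_rec, subn_rec in *; clear -H1 H2 H3; lia.
  rewrite h4 -modnDmr -modnMml Em modnMml mul1n modnDmr hy' hy //.
have haa : 0 < a by rewrite expn_gt0.
case: (leqP (2 ^ n - 1) y) => hyn.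
- set d := y - (2 ^ n - 1).
  have hd : d < a.
    rewrite /d ltn_subLR // /y ha.
    move: hr hkn; rewrite ha -addnn => hr hkn.
    move/leP: hr; move/leP: hkn; move/leP: haa => *; apply/leP.
    unfold addn, subn, addn_rec, subn_rec in *; lia.
  apply: (key d.*2 d).
  + by rewrite ha (leq_trans hd) // -addnn leq_addr.
  + by rewrite ha ltn_double.
  + by rewrite bits_double size_map bits_size_S.
  + rewrite /d -addnn ha -!addnn; move: hyn; rewrite ha -addnn => hyn.
    move: hd; rewrite /d ha -addnn => hd.
    move/leP: hyn; move/leP: hd => *.
    unfold addn, subn, addn_rec, subn_rec in *; lia.
- set d := 2 ^ n - 1 - y.
  have hd : d < a.
    rewrite /d /y ha; move/leP: haa => *; apply/leP.
    rewrite -!addnn; unfold addn, subn, addn_rec, subn_rec in *; lia.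
  apply: (key d d.*2).
  + by rewrite ha ltn_double.
  + by rewrite ha (leq_trans hd) // -addnn leq_addr.
  + by rewrite bits_double size_map bits_size_S.
  + rewrite /d -addnn ha -!addnn; move: hyn; rewrite ha -addnn => hyn.
    move: hd; rewrite /d ha -addnn => hd.
    move/leP: hyn; move/leP: hd => *.
    unfold addn, subn, addn_rec, subn_rec in *; lia.
Qed.
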